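(* Let $n$ and $k$ be integers with $3\le k<n/2$ and $(n,k)\notin\{(8,3),(10,3),(12,5),(13,5),(24,5),(26,5)\}$. Then $A(n,k)=B(n,k)$.
   Context: $\mathrm{DGP}(n,k)$ ($1\le k<n/2$) is the graph with vertex set $\{(u_i,j),(v_i,j): 0\le i\le n-1,\ j\in\{0,1\}\}$ and edges $\{(u_i,j),(u_{i+1},1-j)\}$, $\{(u_i,j),(v_i,1-j)\}$ (spokes, forming the set $\mathcal{S}$), $\{(v_i,j),(v_{i+k},1-j)\}$, subscripts mod $n$ (the canonical double cover of the generalized Petersen graph $\mathrm{GP}(n,k)$). $A(n,k)=\mathrm{Aut}(\mathrm{DGP}(n,k))$ and $B(n,k)$ is the setwise stabilizer of $\mathcal{S}$ in $A(n,k)$. *)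

(* Defs.v *)
From mathcomp Require Import all_boot all_fingroup.
Set Implicit Arguments. Unset Strict Implicit. Unset Printing Implicit Defensive.

(* Vertices of DGP(n,k): (side, i, j) where side = false for u_i, true for v_i,
   i : 'I_n, and j : bool is the layer index in {0,1}. *)
Definition dgp_vertex (n : nat) := (bool * 'I_n * bool)%type.

Definition mkV n (s : bool) (i : 'I_n) (j : bool) : dgp_vertex n := (s, i, j).

Definition dgp_outer n (x y : dgp_vertex n) : bool :=
  let: (s, i, j) := x in let: (s', i', j') := y in
  [&& ~~ s, ~~ s', val i' == (val i + 1) %% n & j' == ~~ j].

Definition dgp_spoke n (x y : dgp_vertex n) : bool :=
  let: (s, i, j) := x in let: (s', i', j') := y in
  [&& ~~ s, s', i' == i & j' == ~~ j].

Definition dgp_inner n k (x y : dgp_vertex n) : bool :=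
  let: (s, i, j) := x in let: (s', i', j') := y in
  [&& s, s', val i' == (val i + k) %% n & j' == ~~ j].

Definition dgp_adj n k (x y : dgp_vertex n) : bool :=
  [|| dgp_outer x y, dgp_outer y x, dgp_spoke x y, dgp_spoke y x,
      dgp_inner k x y | dgp_inner k y x].

Definition dgp_edges n k : {set {set dgp_vertex n}} :=
  [set [set x; y] | x in [set: dgp_vertex n], y in [set y | dgp_adj k x y]].

Definition dgp_spokes n : {set {set dgp_vertex n}} :=
  [set [set mkV false i j; mkV true i (~~ j)] | i : 'I_n, j : bool].

Definition A_aut n k : {set {perm dgp_vertex n}} :=
  [set g : {perm dgp_vertex n} |
     [forall x, forall y, dgp_adj k (g x) (g y) == dgp_adj k x y]].

Definition B_stab n k : {set {perm dgp_vertex n}} :=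
  [set g in A_aut n k |
     [set (fun E : {set dgp_vertex n} => [set g x | x in E]) e | e in dgp_spokes n]
       == dgp_spokes n].

(* Main.v *)
Require Import Defs.
From mathcomp Require Import all_boot all_fingroup.
From Stdlib Require Import ZArith Lia.
From mathcomp Require Import zify.
Set Implicit Arguments. Unset Strict Implicit. Unset Printing Implicit Defensive.

Section Model.
Variable W : Type.
Variable weq : W -> W -> bool.
Variable nb : W -> seq W.
Fixpoint SC (x0 : W) (L : nat) (path : seq W) (cur : W) : nat :=
  match L with
  | 0 => has (weq x0) (nb cur)
  | L'.+1 => sumn [seq (if has (weq d) (cur :: path) then 0 else SC x0 L' (cur :: path) d) | d <- nb cur]
  end.
End Model.

Section Cnt.
Variable V : finType.
Variable adj : rel V.
Fixpoint cnt (x0 : V) (L : nat) (path : seq V) (cur : V) : nat :=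
  match L with
  | 0 => nat_of_bool (adj cur x0)
  | L'.+1 => \sum_(y | adj cur y && (y \notin cur :: path)) cnt x0 L' (cur :: path) y
  end.

Lemma cnt_perm (g : {perm V}) (Hg : forall x y, adj (g x) (g y) = adj x y) L x0 path cur :
  cnt (g x0) L (map g path) (g cur) = cnt x0 L path cur.
Proof.
elim: L path cur => [|L IH] path cur /=; first by rewrite Hg.
rewrite (reindex_inj (@perm_inj _ g)) /=.
apply: eq_big => y.
  by rewrite Hg -map_cons mem_map //; apply: perm_inj.
by move=> _; rewrite -map_cons IH.
Qed.

Variable W : Type.
Variable weq : W -> W -> bool.
Variable nb : W -> seq W.
Variable emb : W -> V.
Variable nbl : V -> seq V.
Hypothesis Hemb : forall w w', (emb w == emb w') = weq w w'.
Hypothesis Hadj : forall x y, adj x y = (y \in nbl x).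
Hypothesis Hu : forall x, uniq (nbl x).
Hypothesis Hnb : forall c, map emb (nb c) = nbl (emb c).

Lemma mem_map_emb x l : (emb x \in map emb l) = has (weq x) l.
Proof. by elim: l => //= d l IH; rewrite in_cons Hemb IH. Qed.

Lemma cnt_SC L x0 path cur :
  cnt (emb x0) L (map emb path) (emb cur) = SC weq nb x0 L path cur.
Proof.
elim: L path cur => [|L IH] path cur /=.
  by rewrite Hadj -Hnb mem_map_emb.
rewrite (eq_bigl (fun y => (y \in nbl (emb cur)) && (y \notin emb cur :: map emb path))); last first.
  by move=> y; rewrite Hadj.
rewrite big_mkcondr /= -big_uniq //= -Hnb big_map.
elim: (nb cur) => [|d l IHl]; first by rewrite big_nil.
rewrite big_cons /= IHl -map_cons mem_map_emb IH.
by rewrite /= ; case: (_ || _).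
Qed.
End Cnt.
Fixpoint lhas (T : Type) (a : T -> bool) (s : seq T) : bool :=
  if s is x :: s' then (if a x then true else lhas a s') else false.
Fixpoint lall (T : Type) (a : T -> bool) (s : seq T) : bool :=
  if s is x :: s' then (if a x then lall a s' else false) else true.
Definition WS := (bool * Z * Z * bool)%type.
Definition nbS (w : WS) : seq WS :=
  let: (s, a, b, p) := w in
  if s then [:: (true, a, (b + 1)%Z, ~~ p); (true, a, (b - 1)%Z, ~~ p); (false, a, b, ~~ p)]
  else [:: (false, (a + 1)%Z, b, ~~ p); (false, (a - 1)%Z, b, ~~ p); (true, a, b, ~~ p)].
Definition weqS (P : Z -> Z -> bool) (w w' : WS) : bool :=
  let: (s, a, b, p) := w in let: (s', a', b', p') := w' in
  if addb s s' then false else if addb p p' then false else P (a - a')%Z (b - b')%Z.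
Definition base (s : bool) : WS := (s, 0%Z, 0%Z, false).
Definition Fsym P (ms : seq nat) (s : bool) (d : nat) : seq nat :=
  [seq SC (weqS P) nbS (base s) (m - 2) [:: base s] (nth (base s) (nbS (base s)) d) | m <- ms].
Definition sep P ms :=
  let u2 := Fsym P ms false 2 in let v2 := Fsym P ms true 2 in
  let u0 := Fsym P ms false 0 in let u1 := Fsym P ms false 1 in
  let v0 := Fsym P ms true 0 in let v1 := Fsym P ms true 1 in
  lall (fun x => lall (fun y => x != y) [:: u0; u1; v0; v1]) [:: u2; v2].
Definition PnkZ (nz kz a b : Z) : bool := Z.eqb (Z.modulo (a + b * kz) nz) 0.
Definition Pnk (n k : nat) (a b : Z) : bool := PnkZ (Z.of_nat n) (Z.of_nat k) a b.
Definition mslist : seq (seq nat) := [:: [:: 8]; [:: 10]; [:: 8; 10]; [:: 6; 8; 10; 12]].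
Definition exc : seq (nat * nat) := [:: (8, 3); (10, 3); (12, 5); (13, 5); (24, 5); (26, 5)].
Section Zstuff.
Variable n : nat.
Local Notation N := n.+1.
Definition zp (m : nat) : 'I_N := Ordinal (ltn_pmod m (ltn0Sn n)).
Definition idx (X : Z) : 'I_N := zp (Z.to_nat (X mod Z.of_nat N)).
Arguments idx X : simpl never.

Lemma NposZ : (0 < Z.of_nat N)%Z. Proof. lia. Qed.

Lemma modnZ (m : nat) : Z.of_nat (m %% N) = (Z.of_nat m mod Z.of_nat N)%Z.
Proof.
apply: (@Z.mod_unique_pos _ _ (Z.of_nat (m %/ N))); last first.
  rewrite {1}(divn_eq m N) Nat2Z.inj_add Nat2Z.inj_mul; ring.
have := ltn_pmod m (ltn0Sn n); move/ltP; lia.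
Qed.

Lemma idxZ X : Z.of_nat (idx X) = (X mod Z.of_nat N)%Z.
Proof.
rewrite /idx /= modnZ Z2Nat.id; first by rewrite Z.mod_mod //; lia.
by apply Z.mod_pos_bound; lia.
Qed.

Lemma idx_eq X X' : (idx X == idx X') = Z.eqb ((X - X') mod Z.of_nat N) 0.
Proof.
apply/eqP/idP.
  move/(f_equal (fun i : 'I_N => Z.of_nat i)); rewrite !idxZ => H.
  apply/Z.eqb_eq; rewrite Zminus_mod H Z.sub_diag; apply Z.mod_0_l; lia.
move/Z.eqb_eq => H; apply: val_inj; apply: Nat2Z.inj; rewrite !idxZ.
have [t Ht] : exists t, (X - X' = t * Z.of_nat N)%Z.
  by apply/Z.mod_divide; [lia | exact H].
by rewrite (_ : X = X' + t * Z.of_nat N)%Z ?Z_mod_plus_full //; lia.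
Qed.

Lemma idx_shift X c (c' : nat) : (exists t, c - Z.of_nat c' = t * Z.of_nat N)%Z ->
  idx (X + c) = zp (idx X + c').
Proof.
case=> t Ht; apply: val_inj; apply: Nat2Z.inj.
rewrite idxZ /= modnZ Nat2Z.inj_add idxZ Zplus_mod_idemp_l.
by rewrite (_ : X + c = X + Z.of_nat c' + t * Z.of_nat N)%Z ?Z_mod_plus_full //; lia.
Qed.

Lemma idx_nat (i : 'I_N) : idx (Z.of_nat i) = i.
Proof.
apply: val_inj; apply: Nat2Z.inj; rewrite idxZ Z.mod_small //.
have := ltn_ord i; move/ltP; lia.
Qed.

Variable k : nat.
Definition nbl (x : dgp_vertex N) : seq (dgp_vertex N) :=
  let: (s, i, j) := x in
  if s then [:: (true, zp (i + k), ~~ j); (true, zp (i + (N - k)), ~~ j); (false, i, ~~ j)]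
  else [:: (false, zp (i + 1), ~~ j); (false, zp (i + n), ~~ j); (true, i, ~~ j)].

Lemma mod_swap (i i' d : nat) : i < N -> i' < N -> d <= N ->
  (i == (i' + d) %% N) = (i' == (i + (N - d)) %% N).
Proof.
move=> Hi Hi' Hd.
have -> : (i' == (i + (N - d)) %% N) = (i' %% N == (i + (N - d)) %% N) by rewrite (modn_small Hi').
rewrite -(eqn_modDr d) -addnA subnK // modnDr (modn_small Hi).
by rewrite eq_sym.
Qed.

Lemma jswap (j j' : bool) : (j == ~~ j') = (j' == ~~ j).
Proof. by case: j; case: j'. Qed.

Hypothesis Hk : 0 < k.
Hypothesis Hkn : k.*2 < N.

Lemma adj_nbl x y : dgp_adj k x y = (y \in nbl x).
Proof.
case: x => [[s i] j]; case: y => [[s' i'] j'].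
rewrite /dgp_adj /dgp_outer /dgp_spoke /dgp_inner /nbl.
have Hkle : k <= N by apply: leq_trans (ltnW Hkn); rewrite -addnn leq_addr.
case: s; case: s' => /=; rewrite !inE /=.
all: rewrite ?xpair_eqE -?val_eqE /= ?orbF.
- rewrite (mod_swap (ltn_ord i) (ltn_ord i') Hkle) (jswap j j').
  by rewrite orbC.
- by rewrite (eq_sym (val i)) jswap.
- by [].
- rewrite (mod_swap (ltn_ord i) (ltn_ord i') (_ : 1 <= N)) // subn1 /= (jswap j j').
  by rewrite orbC.
Qed.

Lemma uniq_nbl x : uniq (nbl x).
Proof.
case: x => [[s i] j]; case: s; rewrite /= !inE !xpair_eqE /= ?andbF ?orbF ?andbT -?val_eqE /= eqxx andbT.
  rewrite eqn_modDl !modn_small; [lia | lia | lia].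
rewrite eqn_modDl !modn_small; [lia | lia | lia].
Qed.

Definition emb (i0 : nat) (j0 : bool) (w : WS) : dgp_vertex N :=
  let: (s, a, b, p) := w in (s, idx (Z.of_nat i0 + a + b * Z.of_nat k)%Z, addb j0 p).

Lemma emb_eq i0 j0 w w' : (emb i0 j0 w == emb i0 j0 w') = weqS (Pnk N k) w w'.
Proof.
case: w => [[[s a] b] p]; case: w' => [[[s' a'] b'] p'] /=.
rewrite !xpair_eqE idx_eq /Pnk /PnkZ.
have -> : (Z.of_nat i0 + a + b * Z.of_nat k - (Z.of_nat i0 + a' + b' * Z.of_nat k))%Z
   = (a - a' + (b - b') * Z.of_nat k)%Z by ring.
have -> : (addb j0 p == addb j0 p') = (p == p') by case: j0; case: p; case: p'.
by case: s; case: s'; case: p; case: p'; case: Z.eqb.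
Qed.

Lemma emb_nb i0 j0 c : map (emb i0 j0) (nbS c) = nbl (emb i0 j0 c).
Proof.
have Hkle : k <= N by apply: leq_trans (ltnW Hkn); rewrite -addnn leq_addr.
case: c => [[[s a] b] p]; case: s => /=; rewrite addbN.
  rewrite (_ : (Z.of_nat i0 + a + (b + 1) * Z.of_nat k =
               (Z.of_nat i0 + a + b * Z.of_nat k) + Z.of_nat k)%Z); last by ring.
  rewrite (_ : (Z.of_nat i0 + a + (b - 1) * Z.of_nat k =
               (Z.of_nat i0 + a + b * Z.of_nat k) + - Z.of_nat k)%Z); last by ring.
  rewrite (idx_shift (Z.of_nat i0 + a + b * Z.of_nat k) (c' := k)); last by exists 0%Z; lia.
  rewrite (idx_shift (Z.of_nat i0 + a + b * Z.of_nat k) (c' := N - k)) //.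
  exists (-1)%Z; rewrite Nat2Z.inj_sub; last by apply/leP; lia.
  lia.
rewrite (_ : (Z.of_nat i0 + (a + 1) + b * Z.of_nat k =
             (Z.of_nat i0 + a + b * Z.of_nat k) + 1)%Z); last by ring.
rewrite (_ : (Z.of_nat i0 + (a - 1) + b * Z.of_nat k =
             (Z.of_nat i0 + a + b * Z.of_nat k) + - 1)%Z); last by ring.
rewrite (idx_shift (Z.of_nat i0 + a + b * Z.of_nat k) (c' := 1)); last by exists 0%Z; lia.
rewrite (idx_shift (Z.of_nat i0 + a + b * Z.of_nat k) (c' := n)) //.
by exists (-1)%Z; lia.
Qed.

Lemma emb_base (i : 'I_N) j s : emb i j (base s) = (s, i, j).
Proof. by rewrite /emb /base /= ?Z.add_0_r ?Z.mul_0_l ?Z.add_0_r idx_nat addbF. Qed.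

Lemma arc_val ms (x : dgp_vertex N) d :
  [seq cnt (dgp_adj k) x (m - 2) [:: x] (nth x (nbl x) d) | m <- ms] = Fsym (Pnk N k) ms x.1.1 d.
Proof.
case: x => [[s i] j]; rewrite [(_, _, _).1.1]/= /Fsym -(emb_base i j s) -emb_nb.
apply: eq_map => m.
have -> : nth (emb i j (base s)) [seq emb i j x | x <- nbS (base s)] d =
          emb i j (nth (base s) (nbS (base s)) d).
  by rewrite /base; case: (s); case: d => [|[|[|d]]] /=; rewrite ?nth_nil.
exact: (cnt_SC (emb_eq i j) adj_nbl uniq_nbl (emb_nb i j) (m - 2) (base s) [:: base s] _).
Qed.

Lemma lallP T (a : T -> bool) s : lall a s = all a s.
Proof. by elim: s => //= x s ->; case: (a x). Qed.
Lemma lhasP T (a : T -> bool) s : lhas a s = has a s.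
Proof. by elim: s => //= x s ->; case: (a x). Qed.

Lemma sep_spec P ms : sep P ms -> forall s s' d', d' < 2 -> Fsym P ms s 2 != Fsym P ms s' d'.
Proof.
rewrite /sep !lallP /= !andbT => /andP [/and4P [H1 H2 H3 H4] /and4P [H5 H6 H7 H8]].
case=> [] [] [|[|d]] //= _; [move: H8 | move: H4]; by case: (_ != _).
Qed.

Lemma perm_adj (g : {perm dgp_vertex N}) : g \in A_aut N k ->
  forall x y, dgp_adj k (g x) (g y) = dgp_adj k x y.
Proof.
rewrite inE => /forallP H x y.
by move/forallP: (H x) => /(_ y) /eqP.
Qed.

Lemma size_nbl x : size (nbl x) = 3.
Proof. by case: x => [[[] i] j]. Qed.

Lemma spoke_img (g : {perm dgp_vertex N}) ms : g \in A_aut N k -> sep (Pnk N k) ms ->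
  forall x, g (nth x (nbl x) 2) = nth (g x) (nbl (g x)) 2.
Proof.
move=> Hg Hs x; have Hadj := perm_adj Hg.
set y := nth x (nbl x) 2.
have Hy : dgp_adj k x y by rewrite adj_nbl mem_nth // size_nbl.
have Hgy : g y \in nbl (g x) by rewrite -adj_nbl Hadj.
set d := index (g y) (nbl (g x)).
have Hd : d < 3 by rewrite -(size_nbl (g x)) index_mem.
have E : nth (g x) (nbl (g x)) d = g y by rewrite nth_index.
have V1 := arc_val ms x 2.
have V2 := arc_val ms (g x) d.
have Hcnt : [seq cnt (dgp_adj k) (g x) (m - 2) [:: g x] (g y) | m <- ms] =
            [seq cnt (dgp_adj k) x (m - 2) [:: x] y | m <- ms].
  by apply: eq_map => m; exact: (cnt_perm Hadj (m - 2) x [:: x] y).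
rewrite E Hcnt V1 in V2.
move: Hd E V2; rewrite -/d; case: d => [|[|[|]]] // Hd E V2.
- by move: (sep_spec Hs x.1.1 (g x).1.1 (isT : 0 < 2)); rewrite V2 eqxx.
- by move: (sep_spec Hs x.1.1 (g x).1.1 (isT : 1 < 2)); rewrite V2 eqxx.
Qed.

Lemma spoke_mem x : [set x; nth x (nbl x) 2] \in dgp_spokes N.
Proof.
case: x => [[[] i] j] /=; apply/imset2P.
  apply: (@Imset2spec _ _ _ _ _ _ _ i (~~ j)) => //.
  by rewrite /mkV negbK setUC.
by apply: (@Imset2spec _ _ _ _ _ _ _ i j).
Qed.

Lemma AB (Hsep : exists ms, sep (Pnk N k) ms) : A_aut N k = B_stab N k.
Proof.
case: Hsep => ms Hs.
apply/setP => g; rewrite /B_stab [in RHS]inE.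
case Hg: (g \in A_aut N k) => //=; symmetry.
rewrite eqEcard card_imset; last exact: (imset_inj (@perm_inj _ g)).
rewrite leqnn andbT; apply/subsetP => e' /imsetP [e He ->].
move/imset2P: He => [i j _ _ ->].
rewrite imsetU1 imset_set1.
have -> : mkV true i (~~ j) = nth (mkV false i j) (nbl (mkV false i j)) 2 by [].
rewrite (spoke_img Hg Hs); exact: spoke_mem.
Qed.
End Zstuff.

Definition dist (w w' : WS) : Z :=
  let: (_, a, b, _) := w in let: (_, a', b', _) := w' in (Z.abs (a - a') + Z.abs (b - b'))%Z.
Fixpoint chain (c : WS) (l : seq WS) : Prop :=
  if l is z :: l' then (dist c z <= 1)%Z /\ chain z l' else True.

Lemma dist_sym w w' : dist w w' = dist w' w.
Proof. case: w => [[[s a] b] p]; case: w' => [[[s' a'] b'] p'] /=; lia. Qed.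
Lemma dist_tri w1 w2 w3 : (dist w1 w3 <= dist w1 w2 + dist w2 w3)%Z.
Proof.
case: w1 => [[[s1 a1] b1] p1]; case: w2 => [[[s2 a2] b2] p2]; case: w3 => [[[s3 a3] b3] p3] /=; lia.
Qed.
Lemma dist_refl w : dist w w = 0%Z.
Proof. case: w => [[[s a] b] p] /=; lia. Qed.

Arguments dist_sym : clear implicits.
Arguments dist_tri : clear implicits.
Arguments dist_refl : clear implicits.

Lemma chain_in c l : chain c l -> forall z, List.In z l -> (dist c z <= Z.of_nat (size l))%Z.
Proof.
elim: l c => //= z l IH c [H1 H2] z' [<-|Hz]; first lia.
have := IH _ H2 _ Hz; have := dist_tri c z z'; lia.
Qed.

Lemma chain_last c l : chain c l -> (dist c (last c l) <= Z.of_nat (size l))%Z.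
Proof.
elim: l c => [|z l IH] c /=; first by rewrite dist_refl; lia.
case=> H1 H2; have := IH _ H2; have := dist_tri c z (last z l); lia.
Qed.

Lemma dist_nb c d : List.In d (nbS c) -> (dist c d <= 1)%Z.
Proof.
case: c => [[[s a] b] p]; case: s => /= [[<-|[<-|[<-|[]]]]|[<-|[<-|[<-|[]]]]] /=; lia.
Qed.

Lemma has_ext_In T (f g : T -> bool) l : (forall x, List.In x l -> f x = g x) -> has f l = has g l.
Proof. elim: l => //= x l IH H; rewrite H ?IH //; [by move=> y Hy; apply: H; right | by left]. Qed.
Lemma map_ext_In T U (f g : T -> U) l : (forall x, List.In x l -> f x = g x) -> map f l = map g l.
Proof. elim: l => //= x l IH H; rewrite H ?IH //; [by move=> y Hy; apply: H; right | by left]. Qed.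

Definition agree (P P' : Z -> Z -> bool) (R : Z) :=
  forall a b, (Z.abs a + Z.abs b <= R)%Z -> P a b = P' a b.

Lemma weq_agree P P' R w w' : agree P P' R -> (dist w w' <= R)%Z -> weqS P w w' = weqS P' w w'.
Proof.
case: w => [[[s a] b] p]; case: w' => [[[s' a'] b'] p'] /= H Hd.
by rewrite H.
Qed.

Lemma SC_agree P P' R (H : agree P P' R) L x0 pth cur :
  chain cur pth -> x0 = last cur pth -> (Z.of_nat (size pth + L + 1) <= R)%Z ->
  SC (weqS P) nbS x0 L pth cur = SC (weqS P') nbS x0 L pth cur.
Proof.
elim: L pth cur => [|L IH] pth cur Hc Hx HR /=.
  congr (nat_of_bool _); apply: has_ext_In => d Hd; apply: (weq_agree H).
  have := chain_last Hc; rewrite -Hx => H1.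
  have := dist_nb Hd; have := dist_tri x0 cur d; rewrite (dist_sym x0 cur); lia.
congr sumn; apply: map_ext_In => d Hd.
have Hdc : (dist d cur <= 1)%Z by rewrite dist_sym; exact: dist_nb.
rewrite (@weq_agree P P' R d cur H); last lia.
rewrite (has_ext_In (g := weqS P' d)); last first.
  move=> z Hz; apply: (weq_agree H).
  have := chain_in Hc Hz; have := dist_tri d cur z; lia.
case: (_ || _) => //; apply: IH => //=; lia.
Qed.

Lemma Fsym_agree P P' R ms s d : agree P P' R ->
  (forall m, m \in ms -> 2 <= m /\ (Z.of_nat m <= R)%Z) -> Fsym P ms s d = Fsym P' ms s d.
Proof.
move=> H Hms; apply/eq_in_map => m /Hms [H2 HR].
apply: (SC_agree H) => //=; last lia.
by split => //; case: s; case: d => [|[|[|d]]] /=; rewrite ?nth_nil /=; lia.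
Qed.

Lemma sep_agree P P' R ms : agree P P' R ->
  (forall m, m \in ms -> 2 <= m /\ (Z.of_nat m <= R)%Z) -> sep P ms = sep P' ms.
Proof. by move=> H Hms; rewrite /sep !(Fsym_agree _ _ H Hms). Qed.



Definition zr : seq Z := [seq (Z.of_nat i - 10)%Z | i <- iota 0 21].
Definition ballall (f : Z * Z -> bool) :=
  lall (fun a => lall (fun b => if (Z.abs a + Z.abs b <=? 10)%Z then f (a, b) else true) zr) zr.

Lemma zrP (f : Z -> bool) : lall f zr -> forall x, (-10 <= x <= 10)%Z -> f x.
Proof.
rewrite lallP all_map => /allP H x Hx.
have Hi : Z.to_nat (x + 10) \in iota 0 21 by rewrite mem_iota; apply/ltP; lia.
have := H _ Hi => /=; rewrite Z2Nat.id; last lia.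
by rewrite (_ : (x + 10 - 10 = x)%Z); last lia.
Qed.

Lemma zrN (f : Z -> bool) : ~~ lall f zr -> exists x, (-10 <= x <= 10)%Z /\ ~~ f x.
Proof.
rewrite lallP all_map => /allPn [i Hi Hf]; exists (Z.of_nat i - 10)%Z; split => //.
by move: Hi; rewrite mem_iota => /andP [_ /ltP]; lia.
Qed.

Lemma ballallP f : ballall f -> forall a b, (Z.abs a + Z.abs b <= 10)%Z -> f (a, b).
Proof.
move=> H a b Hab.
have Ha : (-10 <= a <= 10)%Z by lia.
have Hb : (-10 <= b <= 10)%Z by lia.
have H1 := zrP H Ha; have := zrP H1 Hb.
by case: Z.leb_spec => //; lia.
Qed.

Lemma ballallN f : ~~ ballall f -> exists a b, (Z.abs a + Z.abs b <= 10)%Z /\ ~~ f (a, b).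
Proof.
move/zrN => [a [Ha /zrN [b [Hb]]]].
case: Z.leb_spec => // Hab Hf; by exists a, b.
Qed.

Lemma lhas_ex T (f : T -> bool) s : lhas f s -> exists x, f x.
Proof. elim: s => //= x s IH; case Hx: (f x) => H; [by exists x | exact: IH]. Qed.

Definition norm1 (w : Z * Z) : Z := (Z.abs w.1 + Z.abs w.2)%Z.
Definition nz (w : Z * Z) : bool := ~~ ((w.1 =? 0)%Z && (w.2 =? 0)%Z).
Definition normalized (w : Z * Z) : bool := (0 <? w.2)%Z || ((w.2 =? 0)%Z && (0 <? w.1)%Z).
Definition bad (w : Z * Z) : bool := (w.2 =? 0)%Z || ((w.1 =? 0)%Z && (Z.abs w.2 <=? 2)%Z).
Definition detZ (v w : Z * Z) : Z := (v.1 * w.2 - w.1 * v.2)%Z.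
Definition inZv (v w : Z * Z) : bool :=
  ((v.1 * w.2 =? w.1 * v.2)%Z) &&
  (if (v.1 =? 0)%Z then (w.2 mod v.2 =? 0)%Z else (w.1 mod v.1 =? 0)%Z).
Definition Pv (v : Z * Z) (a b : Z) : bool := inZv v (a, b).
Definition P0 (a b : Z) : bool := (a =? 0)%Z && (b =? 0)%Z.
Definition mslarge : seq (seq nat) := [:: [:: 8]; [:: 10]].

Definition famcheck : bool :=
  lhas (sep P0) mslarge &&
  ballall (fun v => if nz v && normalized v then (if bad v then true else lhas (sep (Pv v)) mslarge) else true).

Definition fincheck : bool :=
  ballall (fun v => if nz v then ballall (fun w =>
    (Z.abs (detZ v w) <=? 100)%Z &&
    (if (detZ v w =? 0)%Z then
      (if inZv v w then true else
        lhas (fun t => let u := (w.1 - t * v.1, w.2 - t * v.2)%Z in nz u && (norm1 u <? norm1 v)%Z) zr)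
     else true)) else true).

Lemma inZv_mult v w : nz v -> inZv v w -> exists t, w = (t * v.1, t * v.2)%Z.
Proof.
case: v => a0 b0; case: w => a b; rewrite /nz /inZv /=.
case: (Z.eqb_spec a0 0) => Ha0 /=.
  case: (Z.eqb_spec b0 0) => //= Hb0 _ /andP [/Z.eqb_eq Hd /Z.eqb_eq Hm].
  have [t Ht] : (b0 | b)%Z by apply/Z.mod_divide.
  exists t; congr pair; last by [].
  subst a0; have : (a * b0 = 0)%Z by lia.
  by case/Z.mul_eq_0 => // ->; lia.
move=> _ /andP [/Z.eqb_eq Hd /Z.eqb_eq Hm].
have [t Ht] : (a0 | a)%Z by apply/Z.mod_divide.
exists t; congr pair => //.
apply: (Z.mul_reg_l _ _ a0) => //.
rewrite Hd Ht; ring.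
Qed.

Lemma PnkE N k a b : (0 < N)%nat ->
  Pnk N k a b = true <-> (Z.of_nat N | a + b * Z.of_nat k)%Z.
Proof.
move=> HN; rewrite /Pnk /PnkZ; split.
  by move/Z.eqb_eq/Z.mod_divide; apply; lia.
by move=> H; apply/Z.eqb_eq/Z.mod_divide => //; lia.
Qed.

Lemma divide_small M x : (0 < M)%Z -> (M | x)%Z -> (Z.abs x < M)%Z -> x = 0%Z.
Proof.
move=> HM [c ->] H.
rewrite Z.abs_mul (Z.abs_eq M) in H; last lia.
have Hc : (Z.abs c < 1)%Z by nia.
have -> : c = 0%Z by lia.
by [].
Qed.

Ltac zb := repeat match goal with
  | |- context [(?x =? ?y)%Z] => case: (Z.eqb_spec x y) => ?
  | |- context [(?x <? ?y)%Z] => case: (Z.ltb_spec x y) => ?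
  | |- context [(?x <=? ?y)%Z] => case: (Z.leb_spec x y) => ?
  end; intros; simpl in *; try done; try lia.

Lemma normalize_ex a b : nz (a, b) -> exists v,
  [/\ nz v, normalized v, norm1 v = norm1 (a, b) & (v = (a, b) \/ v = (- a, - b)%Z)].
Proof.
rewrite /nz /normalized /norm1 /=.
case H: ((0 <? b)%Z || ((b =? 0)%Z && (0 <? a)%Z)).
  by move=> Hnz; exists (a, b); split => //=; left.
move=> Hnz; exists (- a, - b)%Z; split; rewrite /=; [move: H Hnz; zb | move: H Hnz; zb | lia | by right].
Qed.

Lemma lattice N k : (100 < N)%nat -> (3 <= k)%nat -> (2 * k < N)%nat -> fincheck ->
  agree (Pnk N k) P0 10 \/
  exists v, [/\ nz v, normalized v, ~~ bad v, (norm1 v <= 10)%Z & agree (Pnk N k) (Pv v) 10].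
Proof.
move=> HN Hk Hkn Hfin.
have Hf := ballallP Hfin; clear Hfin.
have HN0 : (0 < N)%nat by lia.
have PE : forall a b, Pnk N k a b = true <-> (Z.of_nat N | a + b * Z.of_nat k)%Z.
  by move=> a b; apply: PnkE.
case Hall: (ballall (fun w => ~~ (nz w && Pnk N k w.1 w.2))).
  left => a b Hab; have := ballallP Hall Hab; rewrite /P0 /nz /=.
  case: (Z.eqb_spec a 0) => Ha; case: (Z.eqb_spec b 0) => Hb /=; try by move/negbTE.
  by subst a b; move=> _; apply/PE; exact: Z.divide_0_r.
set Qb := fun r : nat => ~~ ballall (fun w =>
  ~~ [&& (norm1 w =? Z.of_nat r)%Z, nz w & Pnk N k w.1 w.2]).
have QbI : forall u, (norm1 u <= 10)%Z -> nz u -> Pnk N k u.1 u.2 -> Qb (Z.to_nat (norm1 u)).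
  case=> a b Hab Hnz Hp; apply/negP => Hg.
  have := ballallP Hg Hab; rewrite Hnz Hp /= Z2Nat.id; last by rewrite /norm1; lia.
  by rewrite Z.eqb_refl.
have Hex : exists r, Qb r.
  move/negbT: Hall => /ballallN [a [b [Hab]]]; rewrite negbK => /andP [Hnz Hp].
  by exists (Z.to_nat (norm1 (a, b))); apply: QbI.
case: (ex_minnP Hex) => r0 Hr0 Hmin.
have [a0 [b0 [Hab0]]] := ballallN Hr0.
rewrite negbK => /and3P [/Z.eqb_eq Hn0 Hnz0 Hp0].
have [v [Hnz Hnorm Hnv Hvv]] := normalize_ex Hnz0.
have Hpv : (Z.of_nat N | v.1 + v.2 * Z.of_nat k)%Z.
  move/PE: Hp0 => /= Hp0; case: Hvv => -> //=.
  rewrite (_ : (- a0 + - b0 * Z.of_nat k = - (a0 + b0 * Z.of_nat k))%Z); last ring.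
  exact/Z.divide_opp_r.
have Hvb : (norm1 v <= 10)%Z by rewrite Hnv /norm1 /=; lia.
have Hmin' : forall u, (norm1 u <= 10)%Z -> nz u -> Pnk N k u.1 u.2 -> (norm1 v <= norm1 u)%Z.
  move=> u Hu1 Hu2 Hu3; have := Hmin _ (QbI u Hu1 Hu2 Hu3).
  rewrite Hnv Hn0 => H.
  have Hu0 : (0 <= norm1 u)%Z by rewrite /norm1; lia.
  lia.
move: v Hnz Hnorm Hnv Hvv Hpv Hvb Hmin' => [a1 b1] /= Hnz Hnorm _ _ Hpv Hvb Hmin'.
right; exists (a1, b1); split => //.
  rewrite /bad /=; apply/negP => /orP [/Z.eqb_eq Hb1 | /andP [/Z.eqb_eq Ha1 /Z.leb_le Hb1]].
    subst b1; move: Hpv; rewrite Z.mul_0_l Z.add_0_r => /divide_small Hd.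
    move: Hnz; rewrite /nz /=; rewrite Hd ?Z.eqb_refl //; rewrite /norm1 /= in Hvb; lia.
  subst a1; move: Hpv; rewrite Z.add_0_l => /divide_small Hd.
  have Hbk : (b1 * Z.of_nat k = 0)%Z.
    apply: Hd; first lia.
    rewrite Z.abs_mul (Z.abs_eq (Z.of_nat k)); [nia | lia].
  have Hb0 : b1 = 0%Z by nia.
  by move: Hnz; rewrite /nz /= Hb0.
move=> a b Hab; rewrite /Pv.
case Hin: (inZv (a1, b1) (a, b)).
  have [t Ht] := inZv_mult Hnz Hin; case: Ht => -> -> /=.
  apply/PE; rewrite (_ : (t * a1 + t * b1 * Z.of_nat k = t * (a1 + b1 * Z.of_nat k))%Z); last ring.
  exact: Z.divide_mul_r.
apply/negP => /PE Hp.
have := Hf _ _ Hvb; rewrite Hnz => /ballallP /(_ a b Hab) /andP [/Z.leb_le Hdet].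
have Hd0 : detZ (a1, b1) (a, b) = 0%Z.
  apply: (divide_small (M := Z.of_nat N)); [lia | | move: Hdet; rewrite /detZ /=; lia].
  rewrite /detZ /= (_ : (a1 * b - a * b1 = b * (a1 + b1 * Z.of_nat k) - b1 * (a + b * Z.of_nat k))%Z); last ring.
  by apply: Z.divide_sub_r; apply: Z.divide_mul_r.
rewrite Hd0 Z.eqb_refl Hin => /lhas_ex [t /andP [Hnzu /Z.ltb_lt Hlt]].
rewrite /= in Hnzu Hlt.
have Hpu : Pnk N k (a - t * a1) (b - t * b1).
  apply/PE.
  rewrite (_ : (a - t * a1 + (b - t * b1) * Z.of_nat k = (a + b * Z.of_nat k) - t * (a1 + b1 * Z.of_nat k))%Z); last ring.
  by apply: Z.divide_sub_r => //; apply: Z.divide_mul_r.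
have Hub : (norm1 (a - t * a1, b - t * b1)%Z <= 10)%Z by lia.
have := Hmin' (a - t * a1, b - t * b1)%Z Hub Hnzu Hpu; lia.
Qed.

Definition okn n := let nz := Z.of_nat n in lall (fun k => if (3 <= k) && (2 * k < n) then
   (if (n, k) \in exc then true else lhas (sep (PnkZ nz (Z.of_nat k))) mslist) else true) (iota 0 n).
Definition smallcheck lo hi := lall okn (iota lo hi).

Lemma smallcheck_ok : smallcheck 0 101 = true.
Proof. vm_compute. reflexivity. Qed.
Lemma fincheck_ok : fincheck = true.
Proof. vm_compute. reflexivity. Qed.
Lemma famcheck_ok : famcheck = true.
Proof. vm_compute. reflexivity. Qed.

Lemma lhas_mem (f : seq nat -> bool) (s : seq (seq nat)) : lhas f s -> exists2 x, x \in s & f x.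
Proof. by rewrite lhasP => /hasP. Qed.

Lemma mslarge_ok ms : ms \in mslarge -> forall m, m \in ms -> 2 <= m /\ (Z.of_nat m <= 10)%Z.
Proof. by rewrite !inE => /orP [] /eqP -> m; rewrite inE => /eqP ->; split. Qed.

Lemma sep_exists n k : 3 <= k -> 2 * k < n -> (n, k) \notin exc -> exists ms, sep (Pnk n k) ms.
Proof.
move=> Hk Hkn Hex.
case: (leqP n 100) => Hn.
  have := smallcheck_ok; rewrite /smallcheck lallP => /allP /(_ n).
  rewrite mem_iota /= => /(_ (Hn : n < 101)); rewrite /okn lallP => /allP /(_ k).
  rewrite mem_iota /= => /(_ ltac:(lia)).
  move=> H.
  have H' : lhas (sep (PnkZ (Z.of_nat n) (Z.of_nat k))) mslist.
    by move: H; rewrite Hk Hkn (negbTE Hex).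
  have [ms Hms] := lhas_ex H'.
  by exists ms.
have := lattice Hn Hk Hkn fincheck_ok; case.
  move=> Hag; have := famcheck_ok; rewrite /famcheck => /andP [H1 _].
  have [ms Hms Hs] := lhas_mem H1.
  exists ms; by rewrite (sep_agree Hag (mslarge_ok Hms)).
case=> [[a b]] [Hnz Hnorm Hbad Hnv Hag].
have := famcheck_ok; rewrite /famcheck => /andP [_ /ballallP /(_ a b Hnv)].
rewrite Hnz Hnorm (negbTE Hbad) => H1.
have [ms Hms Hs] := lhas_mem H1.
exists ms; by rewrite (sep_agree Hag (mslarge_ok Hms)).
Qed.

Theorem lemma5p10 (n k : nat) :
  3 <= k -> 2 * k < n ->
  ~ ((n, k) \in [:: (8, 3); (10, 3); (12, 5); (13, 5); (24, 5); (26, 5)]) ->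
  A_aut n k = B_stab n k.
Proof.
move=> Hk Hkn Hex.
have [ms Hms] := sep_exists Hk Hkn (introN idP Hex).
case: n Hkn Hex Hms => [|n] Hkn Hex Hms; first lia.
apply: AB; first lia.
  by rewrite -mul2n.
by exists ms.
Qed.
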